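(* Let $p_1<\dots<p_m$ be real numbers with $m\ge3$, let $\mu=\min_{i\ne j}|p_i-p_j|$, and define $\mu_0^2=\big[\sum_{1\le i<j\le m}(p_i-p_j)^{-2}\big]^{-1}$ and $\mu_{k+1}^2=\big(\sum_{1\le i<j\le m}\frac{1}{(p_i-p_j)^2-\mu_{k}^2}\big)^{-1}+\mu_{k}^2$ for $k\ge0$. Then for every $k\ge0$, $$0<\Big[\frac{m-1}{\mu^2/\mu_k^2-1}+\frac34 m\Big]^{-1}<\frac{\mu_{k+1}^2}{\mu_k^2}-1<\frac{\mu^2}{\mu_k^2}-1.$$ *)

(* Defs.v *)
From mathcomp Require Import all_boot all_order all_algebra.
Set Implicit Arguments. Unset Strict Implicit. Unset Printing Implicit Defensive.
Import Order.TTheory GRing.Theory Num.Theory.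
Local Open Scope ring_scope.

Definition pairsum (R : realFieldType) (m : nat) (f : 'I_m -> 'I_m -> R) : R :=
  \sum_(i < m) \sum_(j < m | (i < j)%N) f i j.

Fixpoint muk2 (R : realFieldType) (m : nat) (p : 'I_m -> R) (k : nat) : R :=
  match k with
  | 0 => (pairsum (fun i j => ((p i - p j) ^+ 2)^-1))^-1
  | k'.+1 => let a := muk2 p k' in
             (pairsum (fun i j => ((p i - p j) ^+ 2 - a)^-1))^-1 + a
  end.

(* Main.v *)
Require Import Defs.
From mathcomp Require Import all_boot all_order all_algebra.
From mathcomp Require Import ring lra zify.
Import Order.TTheory GRing.Theory Num.Theory.
Local Open Scope ring_scope.

Lemma sq_ge (R : realFieldType) (x mu : R) : 0 <= mu -> mu <= `|x| -> mu ^+ 2 <= x ^+ 2.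
Proof.
move=> h0 h1; rewrite -(real_normK (num_real x)).
have h2 : 0 <= `|x| by [].
nra.
Qed.

Lemma gap_ind (R : realFieldType) (M : nat) (q : nat -> R) (mu : R) :
  (forall k, (k.+1 < M)%N -> mu <= q k.+1 - q k) ->
  forall i r, (i + r < M)%N -> r%:R * mu <= q (i + r)%N - q i.
Proof.
move=> h i; elim=> [|r IH] hr; first by rewrite ?addn0 subrr mulr0n mul0r.
have hr' : (i + r < M)%N by apply: ltnW; rewrite -addnS.
have h1 := IH hr'.
have h2 : mu <= q (i + r).+1%N - q (i + r)%N by apply: h; rewrite -addnS.
rewrite addnS -natr1.
have -> : q (i + r).+1%N - q i = (q (i + r).+1%N - q (i + r)%N) + (q (i+r)%N - q i) by ring.
lra.
Qed.

Lemma gap2 (R : realFieldType) (M : nat) (q : nat -> R) (mu : R) :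
  (forall k, (k.+1 < M)%N -> mu <= q k.+1 - q k) ->
  forall i j, (i < j)%N -> (j < M)%N -> (j%:R - i%:R) * mu <= q j - q i.
Proof.
move=> h i j hij hjM.
have := @gap_ind _ _ _ _ h i (j - i)%N.
rewrite subnKC ?(ltnW hij) // natrB ?(ltnW hij) //; by apply.
Qed.

Lemma term_bound (R : realFieldType) (M : nat) (q : nat -> R) (mu a : R) :
  0 < mu -> 0 < a -> a < mu ^+ 2 ->
  (forall k, (k.+1 < M)%N -> mu <= q k.+1 - q k) ->
  forall i j, (i.+2 <= j)%N -> (j < M)%N ->
  ((q i - q j) ^+ 2 - a)^-1 <=
  a^-1 / 2 * (- ((j.+1%:R - i%:R - 1)^-1 + (j.+1%:R - i%:R)^-1)
              + ((j%:R - i%:R - 1)^-1 + (j%:R - i%:R)^-1)).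
Proof.
move=> hmu ha hamu hg i j hij hjM.
have hD := @gap2 _ _ _ _ hg _ _ (ltnW hij) hjM.
have hr : 2 <= j%:R - i%:R :> R.
  have : (i + 2)%:R <= j%:R :> R by rewrite ler_nat addn2.
  rewrite natrD; lra.
move: hD hr; set r := j%:R - i%:R; set D := q j - q i.
have -> : (j.+1)%:R - i%:R = r + 1 :> R by rewrite /r -natr1; ring.
move=> hD hr.
have -> : (q i - q j) = - D by rewrite /D; ring.
have e : a^-1 / 2 * (- ((r + 1 - 1)^-1 + (r + 1)^-1) + ((r - 1)^-1 + r^-1))
   = ((r ^+ 2 - 1) * a)^-1.
  field.
  have h1 : r - 1 != 0 by apply/eqP; lra.
  have h2 : r + 1 != 0 by apply/eqP; lra.
  have h3 : r != 0 by apply/eqP; lra.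
  have h4 : r + 1 - 1 != 0 by apply/eqP; lra.
  have h5 : r ^+ 2 - 1 != 0 by apply/eqP; nra.
  have h6 : a != 0 by apply/eqP; lra.
  by rewrite h1 h2 h3 h5 h6.
rewrite e.
have hrm : 0 <= r * mu by nra.
have hD2 : (r * mu) ^+ 2 <= D ^+ 2 by nra.
have hr2 : 3 <= r ^+ 2 - 1 by nra.
have hm2 : (r^+2 - 1) * a <= (-D) ^+ 2 - a.
  rewrite sqrrN.
  have e2 : (r * mu) ^+ 2 = r ^+ 2 * mu ^+ 2 by ring.
  have : r ^+ 2 * a <= r ^+ 2 * mu ^+ 2 by nra.
  rewrite e2 in hD2; nra.
rewrite lef_pV2 ?posrE //; nra.
Qed.

Definition wf (R : realFieldType) (i k : nat) : R :=
  - ((k%:R - i%:R - 1)^-1 + (k%:R - i%:R)^-1).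

Lemma row_bound (R : realFieldType) (M : nat) (q : nat -> R) (mu a : R) :
  0 < mu -> 0 < a -> a < mu ^+ 2 ->
  (forall k, (k.+1 < M)%N -> mu <= q k.+1 - q k) ->
  forall i, \sum_(i.+1 <= j < M) ((q i - q j) ^+ 2 - a)^-1 <
     (i.+1 < M)%N%:R * (mu ^+ 2 - a)^-1 + a^-1 * (3 / 4).
Proof.
move=> hmu ha hamu hg i.
have hai : 0 < a^-1 by rewrite invr_gt0.
case: (ltnP i.+1 M) => hiM; last first.
  rewrite big_geq // mul0r add0r; apply: mulr_gt0 => //; lra.
rewrite big_ltn // mul1r.
have t1 : ((q i - q i.+1)^+2 - a)^-1 <= (mu^+2 - a)^-1.
  have := hg i hiM => h.
  have : mu ^+ 2 <= (q i - q i.+1) ^+ 2 by nra.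
  move=> h2; rewrite lef_pV2 ?posrE; lra.
have t2 : \sum_(i.+2 <= j < M) ((q i - q j) ^+ 2 - a)^-1 <=
          \sum_(i.+2 <= j < M) (a^-1 / 2 * (wf R i j.+1 - wf R i j)).
  apply: ler_sum_nat => j /andP [hj1 hj2].
  by move: (@term_bound _ _ _ _ _ hmu ha hamu hg i j hj1 hj2); rewrite /wf opprK.
rewrite -mulr_sumr telescope_sumr // in t2.
have e2 : wf R i i.+2 = - (1 + 2^-1).
  rewrite /wf; have -> : (i.+2)%:R = i%:R + 2 :> R by rewrite -addn2 natrD.
  have -> : i%:R + 2 - i%:R - 1 = 1 :> R by ring.
  have -> : i%:R + 2 - i%:R = 2 :> R by ring.
  by rewrite invr1.
have hM : (i + 2)%:R <= M%:R :> R by rewrite ler_nat addn2.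
rewrite natrD in hM.
have h3 : wf R i M < 0.
  rewrite /wf oppr_lt0; apply: addr_gt0; rewrite invr_gt0; lra.
rewrite e2 in t2.
have : a^-1 / 2 * (wf R i M - - (1 + 2^-1)) < a^-1 * (3 / 4).
  have -> : a^-1 * (3 / 4) = a^-1 / 2 * (0 - - (1 + 2^-1)).
    by field; apply/eqP; lra.
  rewrite ltr_pM2l; [lra | ].
  by rewrite divr_gt0.
lra.
Qed.

Lemma cond_sum (R : realFieldType) (M i : nat) (F : nat -> R) :
  \sum_(0 <= j < M | (i < j)%N) F j = \sum_(i.+1 <= j < M) F j.
Proof.
case: (leqP i.+1 M) => h.
  rewrite (@big_cat_nat _ _ _ i.+1 0 M) // /= big1_seq ?add0r; last first.
    move=> j /andP [hj]; rewrite mem_index_iota => /andP [_ hj2].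
    by move: hj; rewrite ltnNge -ltnS hj2.
  rewrite big_nat_cond [RHS]big_nat_cond; apply: eq_bigl => j.
  by rewrite andbT; case/boolP: (i.+1 <= j < M)%N => // /andP [->].
rewrite [RHS]big_geq ?(ltnW h) // big1_seq // => j /andP [hj].
rewrite mem_index_iota => /andP [_ hj2].
have : (j < i)%N by apply: (leq_trans hj2); rewrite -ltnS.
by rewrite ltnNge (ltnW hj).
Qed.

Lemma total_bound (R : realFieldType) (n : nat) (q : nat -> R) (mu a : R) :
  0 < mu -> 0 < a -> a < mu ^+ 2 ->
  (forall k, (k.+1 < n.+1)%N -> mu <= q k.+1 - q k) ->
  \sum_(0 <= i < n.+1) \sum_(0 <= j < n.+1 | (i < j)%N) ((q i - q j) ^+ 2 - a)^-1
  < n%:R * (mu ^+ 2 - a)^-1 + n.+1%:R * (a^-1 * (3 / 4)).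
Proof.
move=> hmu ha hamu hg.
under eq_bigr => i _ do rewrite cond_sum.
apply: (@lt_le_trans _ _ (\sum_(0 <= i < n.+1)
   ((i.+1 < n.+1)%N%:R * (mu ^+ 2 - a)^-1 + a^-1 * (3 / 4)))).
  apply: ltr_sum; first by rewrite /index_iota subn0.
  by move=> i _; apply: row_bound.
rewrite big_split /= -mulr_suml sumr_const_nat subn0.
rewrite big_nat_recr //= ltnn addr0.
rewrite (eq_big_nat _ _ (F2 := fun _ => 1)); last first.
  by move=> i /andP [_ hi]; rewrite ltnS hi.
by rewrite sumr_const_nat subn0 -[X in _ + X <= _]mulr_natl.
Qed.

Lemma lowerA (R : realFieldType) (m : nat) (p : 'I_m -> R) (mu a : R)
  (hm : (3 <= m)%N)
  (hmu_att : exists i j : 'I_m, i != j /\ mu = `|p i - p j|)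
  (hmu_min : forall i j : 'I_m, i != j -> mu <= `|p i - p j|) :
  0 <= a -> a < mu ^+ 2 ->
  (mu ^+ 2 - a)^-1 < pairsum (fun i j => ((p i - p j) ^+ 2 - a)^-1).
Proof.
move=> ha hamu.
have [i0 [j0 [hij0 hmu0]]] : exists i j : 'I_m, (i < j)%N /\ mu = `|p i - p j|.
  case: hmu_att => i [j [hne he]].
  case: (ltngtP i j) => h.
  - by exists i, j.
  - by exists j, i; rewrite distrC.
  - by move: hne; rewrite (val_inj h) eqxx.
have hmu0' : 0 <= mu by rewrite hmu0.
have hpos : forall i j : 'I_m, (i < j)%N -> 0 < ((p i - p j) ^+ 2 - a)^-1.
  move=> i j hij; rewrite invr_gt0.
  have hne : i != j by apply/eqP => e; move: hij; rewrite e ltnn.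
  have := @sq_ge _ _ _ hmu0' (hmu_min i j hne); lra.
rewrite /pairsum pair_big_dep (bigD1 (i0, j0)) /=; last by rewrite hij0.
have -> : ((p i0 - p j0) ^+ 2 - a)^-1 = (mu ^+ 2 - a)^-1.
  by rewrite hmu0 real_normK ?num_real.
have h0 : (0 < m)%N by apply: leq_trans hm.
have h1 : (1 < m)%N by apply: leq_trans hm.
have h2 : (2 < m)%N by [].
pose x1 : 'I_m * 'I_m := if (i0, j0) == (Ordinal h0, Ordinal h1)
   then (Ordinal h0, Ordinal h2) else (Ordinal h0, Ordinal h1).
have hx1 : (true && (x1.1 < x1.2)%N) && (x1 != (i0, j0)).
  rewrite /x1; case: eqP => [e|ne] /=.
  - by rewrite e.
  - by apply/eqP => e; apply: ne; rewrite e.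
rewrite (bigD1 x1) //=.
have hs : 0 <= \sum_(i : 'I_m * 'I_m | (true && (i.1 < i.2)%N) && (i != (i0, j0)) && (i != x1))
            ((p i.1 - p i.2) ^+ 2 - a)^-1.
  apply: sumr_ge0 => x /andP [/andP [/andP [_ hx] _] _].
  exact: ltW (hpos _ _ hx).
have hx1' : (x1.1 < x1.2)%N by move: hx1 => /andP [/andP [_ ->]].
have := hpos _ _ hx1'.
lra.
Qed.

Lemma pairsum_ext (R : realFieldType) (m : nat) (f g : 'I_m -> 'I_m -> R) :
  (forall i j, f i j = g i j) -> pairsum f = pairsum g.
Proof. by move=> h; rewrite /pairsum; apply: eq_bigr => i _; apply: eq_bigr => j _. Qed.

Lemma pairsum_nat (R : realFieldType) (n : nat) (p : 'I_n.+1 -> R) (a : R) :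
  pairsum (fun i j => ((p i - p j) ^+ 2 - a)^-1) =
  \sum_(0 <= i < n.+1) \sum_(0 <= j < n.+1 | (i < j)%N)
     ((p (inord i) - p (inord j)) ^+ 2 - a)^-1.
Proof.
rewrite /pairsum big_mkord; apply: eq_bigr => i _.
by rewrite big_mkord; apply: eq_bigr => j _; rewrite !inord_val.
Qed.

Lemma gaps (R : realFieldType) (n : nat) (p : 'I_n.+1 -> R) (mu : R)
  (hinc : forall i j : 'I_n.+1, (i < j)%N -> p i < p j)
  (hmu_min : forall i j : 'I_n.+1, i != j -> mu <= `|p i - p j|) :
  forall k, (k.+1 < n.+1)%N -> mu <= p (inord k.+1) - p (inord k).
Proof.
move=> k hk.
have hk' : (k < n.+1)%N by apply: ltnW.
have hlt : p (inord k) < p (inord k.+1).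
  by apply: hinc; rewrite !inordK.
have hne : (inord k : 'I_n.+1) != inord k.+1.
  apply/eqP => e; have := congr1 (@nat_of_ord _) e; rewrite !inordK // => /eqP.
  by rewrite eqn_leq ltnn andbF.
by have := hmu_min _ _ hne; rewrite distrC gtr0_norm ?subr_gt0.
Qed.

Theorem mainTheorem8 (R : realFieldType) (m : nat) (p : 'I_m -> R) (mu : R)
  (hm : (3 <= m)%N)
  (hinc : forall i j : 'I_m, (i < j)%N -> p i < p j)
  (hmu_att : exists i j : 'I_m, i != j /\ mu = `|p i - p j|)
  (hmu_min : forall i j : 'I_m, i != j -> mu <= `|p i - p j|) :
  forall k : nat,
    0 < ((m.-1)%:R / (mu ^+ 2 / muk2 p k - 1) + 3 / 4 * m%:R)^-1 /\
    ((m.-1)%:R / (mu ^+ 2 / muk2 p k - 1) + 3 / 4 * m%:R)^-1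
      < muk2 p k.+1 / muk2 p k - 1 /\
    muk2 p k.+1 / muk2 p k - 1 < mu ^+ 2 / muk2 p k - 1.
Proof.
case: m p hm hinc hmu_att hmu_min => [|n] // p hm hinc hmu_att hmu_min.
have hmu : 0 < mu.
  case: hmu_att => i [j [hne ->]]; rewrite normr_gt0 subr_eq0.
  case: (ltngtP i j) => h.
  - by have := hinc _ _ h; rewrite lt_neqAle => /andP [].
  - by have := hinc _ _ h; rewrite lt_neqAle eq_sym => /andP [].
  - by move: hne; rewrite (val_inj h) eqxx.
have hS : forall a, 0 <= a -> a < mu ^+ 2 ->
    (mu ^+ 2 - a)^-1 < pairsum (fun i j => ((p i - p j) ^+ 2 - a)^-1).
  by move=> a h1 h2; exact: (@lowerA _ _ _ _ _ hm hmu_att hmu_min h1 h2).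
have hSinv : forall a, 0 <= a -> a < mu ^+ 2 ->
    0 < (pairsum (fun i j => ((p i - p j) ^+ 2 - a)^-1))^-1 /\
    (pairsum (fun i j => ((p i - p j) ^+ 2 - a)^-1))^-1 < mu ^+ 2 - a.
  move=> a h1 h2; have := hS a h1 h2.
  set S := pairsum _ => hs.
  have hc : 0 < (mu ^+ 2 - a)^-1 by rewrite invr_gt0 subr_gt0.
  have hS0 : 0 < S by apply: lt_trans hs.
  split; first by rewrite invr_gt0.
  rewrite -[X in _ < X]invrK ltf_pV2 ?posrE //.
have inv : forall k, 0 < muk2 p k /\ muk2 p k < mu ^+ 2.
  elim=> [|k [IH1 IH2]] /=.
    have mu2 : 0 < mu ^+ 2 by rewrite exprn_gt0.
    have [h1 h2] := hSinv 0 (lexx 0) mu2.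
    rewrite (@pairsum_ext _ _ _ (fun i j => ((p i - p j) ^+ 2 - 0)^-1)); last first.
      by move=> i j; rewrite subr0.
    by rewrite subr0 in h2; split.
  have [h1 h2] := hSinv _ (ltW IH1) IH2.
  split; lra.
move=> k; have [ha hamu] := inv k.
have hSk := hS _ (ltW ha) hamu.
rewrite [muk2 p k.+1]/=.
move: hSk; set a := muk2 p k; set S := pairsum _ => hSk.
rewrite [n.+1.-1]/=.
have hup : S < n%:R * (mu ^+ 2 - a)^-1 + n.+1%:R * (a^-1 * (3 / 4)).
  rewrite /S pairsum_nat.
  apply: total_bound => //.
  exact: gaps.
have hc : 0 < (mu ^+ 2 - a)^-1 by rewrite invr_gt0 subr_gt0.
have hS0 : 0 < S by apply: lt_trans hSk.
have ha0 : a != 0 by rewrite gt_eqF.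
have hma : mu ^+ 2 - a != 0 by rewrite gt_eqF // subr_gt0.
have hn : 0 <= n%:R :> R by [].
have eX : n%:R / (mu ^+ 2 / a - 1) + 3 / 4 * n.+1%:R
          = n%:R * (mu ^+ 2 - a)^-1 * a + 3 / 4 * n.+1%:R.
  by field; rewrite ha0 hma.
rewrite eX.
have hX : 0 < n%:R * (mu ^+ 2 - a)^-1 * a + 3 / 4 * n.+1%:R.
  have : 0 <= n%:R * (mu ^+ 2 - a)^-1 * a by rewrite !mulr_ge0 // ltW.
  have : 0 < n.+1%:R :> R by rewrite ltr0Sn.
  lra.
have eR : (S^-1 + a) / a - 1 = (S * a)^-1 by field; rewrite ha0 gt_eqF.
rewrite eR.
split; first by rewrite invr_gt0.
have hSa : S * a < n%:R * (mu ^+ 2 - a)^-1 * a + 3 / 4 * n.+1%:R.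
  have e2 : (n%:R * (mu ^+ 2 - a)^-1 + n.+1%:R * (a^-1 * (3 / 4))) * a
          = n%:R * (mu ^+ 2 - a)^-1 * a + 3 / 4 * n.+1%:R by field; rewrite ?ha0 ?hma.
  by rewrite -e2 ltr_pM2r.
split; first by rewrite ltf_pV2 ?posrE ?mulr_gt0.
have [h1 h2] := hSinv _ (ltW ha) hamu.
rewrite -/S in h1 h2.
rewrite -/a in h2.
have : (S^-1 + a) / a < mu ^+ 2 / a by rewrite ltr_pM2r ?invr_gt0 //; lra.
by rewrite -eR; lra.
Qed.
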